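(* Let $0<\tau\le2^*-1$ be fixed. In the setting below, there exists a sequence $\sigma_\alpha\to0$ of positive numbers depending only on $(\mu_{i,\alpha})_\alpha$ and $(x_{i,\alpha})_\alpha$, $1\le i\le k$, such that for all $\alpha$ and all $x\in M$ $$\Big(\sum_{i=1}^kB_{i,\alpha}(x)\Big)^{2^*-1-\tau}\Big(\sum_{i=1}^k\Theta_{i,\alpha}(x)B_{i,\alpha}(x)\Big)^{\tau}\le\sigma_\alpha\Big(\sum_{i=0}^kB_{i,\alpha}(x)+\sum_{i=1}^kB_{i,\alpha}(x)^{2^*-1}\Big).$$
   Context: $(M,g)$ smooth closed Riemannian manifold, $n\ge3$, $2^*=\frac{2n}{n-2}$; $k\ge1$; $x_{i,\alpha}\in M$, $\mu_{i,\alpha}>0$ ($1\le i\le k$) with $\mu_{i,\alpha}\to0$ and, for $i\ne j$, $\frac{\mu_{i,\alpha}}{\mu_{j,\alpha}}+\frac{\mu_{j,\alpha}}{\mu_{i,\alpha}}+\frac{d_g(x_{i,\alpha},x_{j,\alpha})^2}{\mu_{i,\alpha}\mu_{j,\alpha}}\to\infty$. $B_{i,\alpha}(x)=\mu_{i,\alpha}^{\frac{n-2}{2}}(\mu_{i,\alpha}^2+\frac{d_g(x_{i,\alpha},x)^2}{n(n-2)})^{-\frac{n-2}{2}}$ for $1\le i\le k$; $B_{0,\alpha}$ is either identically $0$ or identically $1$ (it equals $0$ iff $u_0\equiv0$ and $\ker(\triangle_g+h)=\{0\}$, for given $h\in L^\infty(M)$ and a solution $u_0$ of $\triangle_gu_0+hu_0=|u_0|^{2^*-2}u_0$).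 $\theta_{i,\alpha}(x)=\mu_{i,\alpha}+d_g(x_{i,\alpha},x)$; $\Theta_{i,\alpha}=\theta_{i,\alpha}$ if $n=3$, $\theta_{i,\alpha}^2|\ln\theta_{i,\alpha}|$ if $n=4$, $\theta_{i,\alpha}^2$ if $n\ge5$. *)

(* Defs.v *)
From Stdlib Require Import Reals Lra.
Open Scope R_scope.

(* Real power with the convention 0^y = 0 (used only for y > 0 with base 0;
   for positive bases it is Stdlib's Rpower x y = exp (y ln x)). *)
Definition rpow (x y : R) : R :=
  if Req_EM_T x 0 then 0 else Rpower x y.

Definition crit (n : nat) : R := 2 * INR n / (INR n - 2).

Definition is_metric {M : Type} (d : M -> M -> R) : Prop :=
  (forall x y, 0 <= d x y) /\ (forall x y, d x y = 0 <-> x = y) /\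
  (forall x y, d x y = d y x) /\
  (forall x y z, d x z <= d x y + d y z).

(* sequential compactness (M compact, as a closed manifold is) *)
Definition seq_compact {M : Type} (d : M -> M -> R) : Prop :=
  forall u : nat -> M, exists (phi : nat -> nat) (l : M),
    (forall m, (phi m < phi (S m))%nat) /\
    Un_cv (fun m => d (u (phi m)) l) 0.

Definition bubble (n : nat) {M : Type} (d : M -> M -> R)
    (mu : R) (p x : M) : R :=
  rpow mu ((INR n - 2) / 2) *
  rpow (mu ^ 2 + d p x ^ 2 / (INR n * (INR n - 2))) (- ((INR n - 2) / 2)).

Definition theta {M : Type} (d : M -> M -> R) (mu : R) (p x : M) : R :=
  mu + d p x.

Definition Theta (n : nat) {M : Type} (d : M -> M -> R)
    (mu : R) (p x : M) : R :=
  let t := theta d mu p x in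
  match n with
  | 3%nat => t
  | 4%nat => t ^ 2 * Rabs (ln t)
  | _ => t ^ 2
  end.

(* finite sum over i = 0..k-1 (indices 1..k of the paper shifted by one) *)
Fixpoint sumk (k : nat) (f : nat -> R) : R :=
  match k with O => 0 | S k' => sumk k' f + f k' end.

(* Main.v *)
Require Import Defs.
From Stdlib Require Import Reals Lra Lia ZArith Classical ClassicalEpsilon.
Open Scope R_scope.

Lemma rpow_pos x y : 0 < x -> rpow x y = Rpower x y.
Proof. intro H. unfold rpow. destruct (Req_EM_T x 0); [lra|reflexivity]. Qed.

Lemma rpow_ge0 x y : 0 <= rpow x y.
Proof. unfold rpow. destruct (Req_EM_T x 0); [lra|]. unfold Rpower. left; apply exp_pos. Qed.

Lemma Rpower_pos x y : 0 < Rpower x y.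
Proof. unfold Rpower; apply exp_pos. Qed.

Lemma rpow_mono x y e : 0 < e -> 0 <= x -> x <= y -> 0 < y -> rpow x e <= Rpower y e.
Proof.
  intros He Hx Hxy Hy. destruct (Req_EM_T x 0) as [->|Hn].
  - unfold rpow. destruct (Req_EM_T 0 0); [|lra]. left; apply Rpower_pos.
  - rewrite rpow_pos by lra. apply Rle_Rpower_l; lra.
Qed.

Lemma Rpower_inv_mono a b e : 0 < e -> 0 < a -> 0 < b -> Rpower b e <= Rpower a e -> b <= a.
Proof.
  intros He Ha Hb H. destruct (Rle_lt_dec b a); auto.
  assert (Rpower a e < Rpower b e) by (apply Rlt_Rpower_l; lra). lra.
Qed.

Lemma Rpower_half_sq x : 0 < x -> Rpower x (/2) * Rpower x (/2) = x.
Proof. intro H. rewrite <- Rpower_plus. replace (/2 + /2) with 1 by field. apply Rpower_1; auto. Qed.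

Lemma sumk_ext k f g : (forall i, (i < k)%nat -> f i = g i) -> sumk k f = sumk k g.
Proof. induction k; simpl; intros; auto. rewrite IHk by (intros; apply H; lia). rewrite H by lia. auto. Qed.

Lemma sumk_le k f g : (forall i, (i < k)%nat -> f i <= g i) -> sumk k f <= sumk k g.
Proof. induction k; simpl; intros; [lra|]. assert (H1 := IHk (fun i Hi => H i ltac:(lia))). specialize (H k ltac:(lia)). lra. Qed.

Lemma sumk_nonneg k f : (forall i, (i < k)%nat -> 0 <= f i) -> 0 <= sumk k f.
Proof. intro H. replace 0 with (sumk k (fun _ => 0)). apply sumk_le; auto. induction k; simpl; auto. rewrite IHk; [lra| intros; apply H; lia]. Qed.

Lemma sumk_pos k f : (1 <= k)%nat -> (forall i, (i < k)%nat -> 0 < f i) -> 0 < sumk k f.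
Proof. intros Hk H. destruct k; [lia|]. simpl.
  assert (0 <= sumk k f) by (apply sumk_nonneg; intros; left; apply H; lia).
  specialize (H k ltac:(lia)). lra. Qed.

Lemma sumk_const k c : sumk k (fun _ => c) = INR k * c.
Proof. induction k; simpl sumk; [simpl; ring|]. rewrite IHk, S_INR. ring. Qed.

Lemma sumk_scale k c f : sumk k (fun i => c * f i) = c * sumk k f.
Proof. induction k; simpl; [ring|]. rewrite IHk; ring. Qed.

Lemma sumk_add k f g : sumk k (fun i => f i + g i) = sumk k f + sumk k g.
Proof. induction k; simpl; [ring|]. rewrite IHk; ring. Qed.

Lemma sumk_term k f j : (j < k)%nat -> (forall i, (i < k)%nat -> 0 <= f i) -> f j <= sumk k f.
Proof. induction k; intros Hj H; [lia|]. simpl.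
  assert (0 <= sumk k f) by (apply sumk_nonneg; intros; apply H; lia).
  destruct (Nat.eq_dec j k) as [->|].
  - lra.
  - assert (f j <= sumk k f) by (apply IHk; [lia| intros; apply H; lia]).
    specialize (H k ltac:(lia)). lra.
Qed.

Lemma sumk_max k f : (1 <= k)%nat -> exists j, (j < k)%nat /\ forall i, (i < k)%nat -> f i <= f j.
Proof. induction k; intro Hk; [lia|]. destruct k.
  - exists 0%nat; split; [lia|]. intros i Hi; replace i with 0%nat by lia; lra.
  - destruct IHk as [j [Hj H]]; [lia|].
    destruct (Rle_dec (f j) (f (S k))).
    + exists (S k); split; [lia|]. intros i Hi. destruct (Nat.eq_dec i (S k)) as [->|]; [lra|].
      specialize (H i ltac:(lia)); lra.
    + exists j; split; [lia|]. intros i Hi. destruct (Nat.eq_dec i (S k)) as [->|]; [lra|].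
      apply H; lia.
Qed.

Lemma Un_cv_ext u v l : (forall a, u a = v a) -> Un_cv u l -> Un_cv v l.
Proof. intros H Hu e He. destruct (Hu e He) as [N HN]. exists N; intros; rewrite <- H; auto. Qed.

Lemma Un_cv_sumk k (f : nat -> nat -> R) :
  (forall i, (i < k)%nat -> Un_cv (f i) 0) -> Un_cv (fun a => sumk k (fun i => f i a)) 0.
Proof. induction k; intro H; simpl.
  - intros e He; exists 0%nat; intros; unfold R_dist; rewrite Rminus_0_r, Rabs_R0; lra.
  - replace 0 with (0+0) by ring. apply CV_plus; [apply IHk; intros; apply H; lia| apply H; lia].
Qed.

Lemma Un_cv_Rpower u e : 0 < e -> (forall a, 0 < u a) -> Un_cv u 0 -> Un_cv (fun a => Rpower (u a) e) 0.
Proof.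
  intros He Hp Hu eps Heps.
  destruct (Hu (Rpower eps (/e)) (Rpower_pos _ _)) as [N HN].
  exists N; intros a Ha. specialize (HN a Ha). unfold R_dist in *.
  rewrite Rminus_0_r in *. rewrite Rabs_right in HN by (left; apply Hp).
  rewrite Rabs_right by (left; apply Rpower_pos).
  replace eps with (Rpower (Rpower eps (/e)) e).
  - apply Rlt_Rpower_l; [auto| split; [apply Hp|auto]].
  - rewrite Rpower_mult. replace (/e * e) with 1 by (field; lra). apply Rpower_1; auto.
Qed.

Lemma Un_cv_scal c u : Un_cv u 0 -> Un_cv (fun a => c * u a) 0.
Proof. intro H. replace 0 with (c * 0) by ring. apply CV_mult; auto.
  intros e He; exists 0%nat; intros; unfold R_dist; rewrite Rminus_diag, Rabs_R0; lra. Qed.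

Lemma cv_bounded u : Un_cv u 0 -> exists Mb, forall a, u a <= Mb.
Proof.
  intro H. destruct (H 1 ltac:(lra)) as [N HN].
  assert (forall N, exists Mb, forall a, (a < N)%nat -> u a <= Mb) as G.
  { induction N0. exists 0; intros; lia.
    destruct IHN0 as [Mb HM]. exists (Rmax Mb (u N0)). intros a Ha.
    destruct (Nat.eq_dec a N0) as [->|]. apply Rmax_r. eapply Rle_trans; [apply HM; lia| apply Rmax_l]. }
  destruct (G N) as [Mb HM]. exists (Rmax Mb 1). intros a.
  destruct (Nat.lt_ge_cases a N).
  - eapply Rle_trans; [apply HM; auto| apply Rmax_l].
  - specialize (HN a H0). unfold R_dist in HN. rewrite Rminus_0_r in HN.
    apply Rabs_def2 in HN. eapply Rle_trans; [|apply Rmax_r]. lra.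
Qed.

Lemma strict_incr_ge (phi : nat -> nat) : (forall m, (phi m < phi (S m))%nat) -> forall m, (m <= phi m)%nat.
Proof. intros H m; induction m; [lia|]. specialize (H m); lia. Qed.

Lemma dist_bounded {M : Type} (dg : M -> M -> R) : is_metric dg -> seq_compact dg ->
  exists Db, 0 <= Db /\ forall x y, dg x y <= Db.
Proof.
  intros [Hpos [_ [Hsym Htri]]] Hc.
  destruct (classic (exists x0 : M, True)) as [[x0 _]|Hne].
  2:{ exists 0; split; [lra|]. intros x; exfalso; apply Hne; exists x; auto. }
  destruct (classic (exists Db, forall y, dg x0 y <= Db)) as [[Db HD]|Hnb].
  - exists (2 * Rmax Db 0). split. assert (0 <= Rmax Db 0) by apply Rmax_r. lra.
    intros x y. specialize (Htri x x0 y). rewrite (Hsym x x0) in Htri.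
    assert (dg x0 x <= Rmax Db 0) by (eapply Rle_trans; [apply HD|apply Rmax_l]).
    assert (dg x0 y <= Rmax Db 0) by (eapply Rle_trans; [apply HD|apply Rmax_l]). lra.
  - exfalso.
    assert (Hy : forall m : nat, {y | INR m < dg x0 y}).
    { intro m. apply constructive_indefinite_description.
      apply NNPP; intro Hn. apply Hnb. exists (INR m). intro y.
      apply Rnot_lt_le. intro Hl. apply Hn. exists y; auto. }
    destruct (Hc (fun m => proj1_sig (Hy m))) as [phi [l [Hphi Hcv]]].
    destruct (Hcv 1 ltac:(lra)) as [N HN].
    destruct (archimed (dg x0 l + 1)) as [Har _].
    set (m := Nat.max N (Z.to_nat (up (dg x0 l + 1)))).
    specialize (HN m (Nat.le_max_l _ _)). unfold R_dist in HN. rewrite Rminus_0_r in HN.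
    apply Rabs_def2 in HN.
    destruct (Hy (phi m)) as [y Hyv] eqn:E. simpl in HN.
    specialize (Htri x0 l y). rewrite (Hsym l y) in Htri.
    assert (INR m <= INR (phi m)) by (apply le_INR; apply strict_incr_ge; auto).
    assert (IZR (up (dg x0 l + 1)) <= INR m).
    { assert (0 <= up (dg x0 l + 1))%Z.
      { apply le_IZR. specialize (Hpos x0 l). lra. }
      rewrite <- (Z2Nat.id (up _)) by auto. rewrite <- INR_IZR_INZ. apply le_INR. unfold m; lia. }
    lra.
Qed.

Lemma ln_le_xm1 t : 0 < t -> ln t <= t - 1.
Proof. intro H. assert (H1 := exp_ineq1_le (ln t)). rewrite exp_ln in H1 by auto. lra. Qed.

Lemma tlnt_bound t D : 1 <= D -> 0 < t <= D -> t * Rabs (ln t) <= D * D.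
Proof.
  intros HD Ht. destruct (Rle_lt_dec t 1).
  - assert (ln t <= 0). { destruct (Rle_lt_dec t 1); [|lra]. destruct r.
      left. rewrite <- ln_1. apply ln_increasing; lra. rewrite H, ln_1; lra. }
    rewrite Rabs_left1 by auto.
    assert (H2 := ln_le_xm1 (/t) ltac:(apply Rinv_0_lt_compat; lra)).
    rewrite ln_Rinv in H2 by lra.
    assert (t * (- ln t) <= t * (/t - 1)) by (apply Rmult_le_compat_l; lra).
    replace (t * (/t - 1)) with (1 - t) in H0 by (field; lra). nra.
  - assert (0 <= ln t) by (left; rewrite <- ln_1; apply ln_increasing; lra).
    rewrite Rabs_right by lra. assert (H2 := ln_le_xm1 t ltac:(lra)). nra.
Qed.

Lemma Theta_bound n {M : Type} (d : M -> M -> R) mu p x D :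
  1 <= D -> 0 < theta d mu p x <= D ->
  0 <= Theta n d mu p x <= D ^ 2 * theta d mu p x.
Proof.
  intros HD Ht. unfold Theta. set (t := theta d mu p x) in *.
  assert (Ht2 : t <= D * D) by nra.
  assert (Ht3 : t * t <= D * D * t) by nra.
  assert (0 <= Rabs (ln t)) by apply Rabs_pos.
  assert (H1 := tlnt_bound t D HD Ht).
  destruct n as [|[|[|[|[|n]]]]]; simpl; split; try nra.  assert (D*D >= 1) by nra. nra.
Qed.

Lemma bubble_facts n {M : Type} (dg : M -> M -> R) mu p x s :
  (3 <= n)%nat -> 0 <= dg p x -> 0 < mu -> mu <= s ->
  0 < bubble n dg mu p x /\
  (Rpower s ((INR n - 2) / 2 / 2) <= bubble n dg mu p x ->
     theta dg mu p x ^ 2 <= 2 * (INR n * (INR n - 2)) * Rpower s (/2)).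
Proof.
  intros Hn Hd Hmu Hs. unfold bubble, theta.
  set (d := dg p x) in *. set (m := (INR n - 2) / 2).
  assert (Hn3 : 3 <= INR n) by (replace 3 with (INR 3) by (simpl; ring); apply le_INR; auto).
  set (c := INR n * (INR n - 2)).
  assert (Hc : 3 <= c) by (unfold c; nra).
  assert (Hm : 0 < m) by (unfold m; lra).
  set (X := mu ^ 2 + d ^ 2 / c).
  assert (HX : 0 < X). { unfold X. assert (0 <= d^2/c) by (unfold Rdiv; apply Rmult_le_pos; [nra| left; apply Rinv_0_lt_compat; lra]). nra. }
  rewrite !rpow_pos by auto.
  assert (HB : Rpower mu m * Rpower X (- m) = Rpower (mu / X) m).
  { unfold Rdiv. rewrite <- Rpower_mult_distr by (auto; apply Rinv_0_lt_compat; auto).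
    f_equal. unfold Rpower. rewrite ln_Rinv by auto. f_equal; ring. }
  rewrite HB. split; [apply Rpower_pos|].
  intro H.
  assert (Hs0 : 0 < s) by lra.
  assert (E : Rpower s (m/2) = Rpower (Rpower s (/2)) m) by (rewrite Rpower_mult; f_equal; field).
  rewrite E in H. apply Rpower_inv_mono in H; [|auto|unfold Rdiv; apply Rmult_lt_0_compat; auto; apply Rinv_0_lt_compat; auto|apply Rpower_pos].
  set (r := Rpower s (/2)) in *.
  assert (Hr : 0 < r) by apply Rpower_pos.
  assert (Hrr : r * r = s) by (apply Rpower_half_sq; auto).
  assert (H2 : r * X <= mu).
  { replace mu with (mu / X * X) by (field; lra). apply Rmult_le_compat_r; lra. }
  assert (HXr : X <= r) by nra.
  assert (Hd2 : d ^ 2 = c * (d ^ 2 / c)) by (field; lra).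
  assert (0 <= d ^ 2 / c) by (unfold Rdiv; apply Rmult_le_pos; [nra| left; apply Rinv_0_lt_compat; lra]).
  unfold X in HXr. set (y := d ^ 2 / c) in *.
  assert ((mu + d) ^ 2 = 2 * mu ^ 2 + 2 * d ^ 2 - (mu - d) ^ 2) by ring.
  assert (0 <= (mu - d) ^ 2) by apply pow2_ge_0.
  assert (2 * c * (mu ^ 2 + y) = 2 * mu ^ 2 + 2 * (c - 1) * mu ^ 2 + 2 * (c * y)) by ring.
  assert (0 <= 2 * (c - 1) * mu ^ 2) by (apply Rmult_le_pos; [lra| apply pow2_ge_0]).
  assert (2 * c * (mu ^ 2 + y) <= 2 * c * r) by (apply Rmult_le_compat_l; lra).
  rewrite <- Hd2 in *. lra.
Qed.

Lemma combine S Y p tau : 0 < Y -> 0 < S ->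
  Rpower S (p - tau) * Rpower (Y * S) tau = Rpower Y tau * Rpower S p.
Proof. intros HY HS. rewrite <- Rpower_mult_distr by auto.
  replace (Rpower S (p - tau) * (Rpower Y tau * Rpower S tau)) with
    (Rpower Y tau * (Rpower S (p - tau) * Rpower S tau)) by ring.
  rewrite <- Rpower_plus. f_equal. f_equal. ring. Qed.

Theorem lemmaA2
  (n : nat) (Hn : (3 <= n)%nat)
  (tau : R) (Htau : 0 < tau <= crit n - 1)
  (M : Type) (dg : M -> M -> R) (Hmet : is_metric dg) (Hcpt : seq_compact dg)
  (k : nat) (Hk : (1 <= k)%nat)
  (mu : nat -> nat -> R) (xc : nat -> nat -> M)
  (Hmupos : forall i a, (i < k)%nat -> 0 < mu i a)
  (Hmu0 : forall i, (i < k)%nat -> Un_cv (mu i) 0)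
  (Hsep : forall i j, (i < k)%nat -> (j < k)%nat -> i <> j ->
     cv_infty (fun a => mu i a / mu j a + mu j a / mu i a
                        + dg (xc i a) (xc j a) ^ 2 / (mu i a * mu j a))) :
  exists sigma : nat -> R,
    (forall a, 0 < sigma a) /\ Un_cv sigma 0 /\
    forall (B0 : R), (B0 = 0 \/ B0 = 1) ->
    forall (a : nat) (x : M),
      rpow (sumk k (fun i => bubble n dg (mu i a) (xc i a) x)) (crit n - 1 - tau)
      * rpow (sumk k (fun i => Theta n dg (mu i a) (xc i a) x
                               * bubble n dg (mu i a) (xc i a) x)) tau
      <= sigma a * (B0 + sumk k (fun i => bubble n dg (mu i a) (xc i a) x)
                    + sumk k (fun i => rpow (bubble n dg (mu i a) (xc i a) x)
                                            (crit n - 1))).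
Proof.
  destruct (dist_bounded dg Hmet Hcpt) as [Db [HDb0 HDb]].
  assert (Hdpos : forall x y, 0 <= dg x y) by apply Hmet.
  set (sf := fun a => sumk k (fun i => mu i a)).
  assert (Hs0 : forall a, 0 < sf a) by (intro a; apply sumk_pos; auto).
  assert (Hscv : Un_cv sf 0) by (apply (Un_cv_sumk k mu); auto).
  destruct (cv_bounded sf Hscv) as [Ms HMs].
  assert (Hmule : forall i a, (i < k)%nat -> mu i a <= sf a).
  { intros i a Hi. apply (sumk_term k (fun i => mu i a)); auto. intros; left; auto. }
  set (D := Db + Rabs Ms + 1).
  assert (HD1 : 1 <= D) by (unfold D; assert (0 <= Rabs Ms) by apply Rabs_pos; lra).
  set (K := D ^ 2). set (KD := K * D).
  assert (HK : 0 < K) by (unfold K; nra).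
  assert (HKD : 0 < KD) by (unfold KD; nra).
  assert (Hn3 : 3 <= INR n) by (replace 3 with (INR 3) by (simpl; ring); apply le_INR; auto).
  set (m := (INR n - 2) / 2).
  assert (Hm : 0 < m) by (unfold m; lra).
  set (c := INR n * (INR n - 2)).
  assert (Hc : 3 <= c) by (unfold c; nra).
  set (p := crit n - 1).
  assert (Hp1 : 0 < p - 1).
  { unfold p. replace (crit n - 1 - 1) with (4 / (INR n - 2)).
    2:{ unfold crit. field. lra. }
    unfold Rdiv. apply Rmult_lt_0_compat; [lra| apply Rinv_0_lt_compat; lra]. }
  set (rho := fun a => Rpower (sf a) (m / 2 / 2)).
  set (lam := fun a => Rpower (sf a) (m / 2)).
  assert (Hlam : forall a, lam a = rho a * rho a).
  { intro a. unfold lam, rho. rewrite <- Rpower_plus. f_equal. field. }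
  set (eta := fun a => Rpower (2 * c * Rpower (sf a) (/2)) (/2)).
  assert (Heta : forall a, eta a * eta a = 2 * c * Rpower (sf a) (/2)).
  { intro a. apply Rpower_half_sq. apply Rmult_lt_0_compat; [lra| apply Rpower_pos]. }
  set (Z := fun a => K * eta a + INR k * KD * rho a).
  assert (Hk0 : 0 < INR k) by (apply lt_0_INR; lia).
  assert (HZ : forall a, 0 < Z a).
  { intro a. unfold Z. assert (0 < eta a) by apply Rpower_pos. assert (0 < rho a) by apply Rpower_pos.
    assert (0 < INR k * KD) by (apply Rmult_lt_0_compat; auto).
    assert (0 < INR k * KD * rho a) by (apply Rmult_lt_0_compat; auto).
    assert (0 < K * eta a) by (apply Rmult_lt_0_compat; auto). lra. }
  exists (fun a => Rpower KD tau * Rpower (rho a) (p - 1) + Rpower (INR k) p * Rpower (Z a) tau).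
  split; [|split].
  - intro a. assert (H1 := Rpower_pos KD tau). assert (H2 := Rpower_pos (rho a) (p-1)).
    assert (H3 := Rpower_pos (INR k) p). assert (H4 := Rpower_pos (Z a) tau). nra.
  - assert (Hrho : Un_cv rho 0).
    { unfold rho. apply Un_cv_Rpower; auto. unfold Rdiv; lra. }
    assert (Hrhop : forall a, 0 < rho a) by (intro; apply Rpower_pos).
    assert (Heta0 : Un_cv eta 0).
    { unfold eta. apply Un_cv_Rpower; [lra| intro; apply Rmult_lt_0_compat; [lra|apply Rpower_pos]|].
      apply Un_cv_scal. apply Un_cv_Rpower; auto; lra. }
    assert (HZ0 : Un_cv Z 0).
    { unfold Z. replace 0 with (0 + 0) by ring. apply CV_plus.
      apply Un_cv_scal; auto. apply Un_cv_scal; auto. }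
    replace 0 with (0 + 0) by ring. apply CV_plus.
    + apply Un_cv_scal. apply Un_cv_Rpower; auto; lra.
    + apply Un_cv_scal. apply Un_cv_Rpower; auto; lra.
  - intros B0 HB0 a x.
    assert (HB0p : 0 <= B0) by (destruct HB0; lra).
    set (Bi := fun i => bubble n dg (mu i a) (xc i a) x).
    set (Ti := fun i => Theta n dg (mu i a) (xc i a) x * bubble n dg (mu i a) (xc i a) x).
    change (fun i => bubble n dg (mu i a) (xc i a) x) with Bi.
    change (fun i => Theta n dg (mu i a) (xc i a) x * bubble n dg (mu i a) (xc i a) x) with Ti.
    assert (Hper : forall i, (i < k)%nat -> 0 < Bi i /\ 0 <= Ti i /\ Ti i <= KD * Bi i /\ Ti i <= K * eta a * Bi i + KD * lam a).
    { intros i Hi.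
      destruct (bubble_facts n dg (mu i a) (xc i a) x (sf a) Hn (Hdpos _ _) (Hmupos i a Hi) (Hmule i a Hi))
        as [Hb Hth].
      assert (Hthb : 0 < theta dg (mu i a) (xc i a) x <= D).
      { unfold theta. assert (H1 := Hmupos i a Hi). assert (H2 := Hdpos (xc i a) x).
        assert (H3 := HDb (xc i a) x). assert (H4 := Hmule i a Hi). assert (H5 := HMs a).
        assert (H6 := Rle_abs Ms). unfold D. split; lra. }
      destruct (Theta_bound n dg (mu i a) (xc i a) x D HD1 Hthb) as [HT0 HT1].
      fold K in HT1.
      unfold Bi, Ti; cbv beta. set (b := bubble n dg (mu i a) (xc i a) x) in *.
      set (th := theta dg (mu i a) (xc i a) x) in *.
      set (TT := Theta n dg (mu i a) (xc i a) x) in *.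
      assert (HTD : TT <= KD) by (unfold KD; nra).
      assert (He0 : 0 < eta a) by apply Rpower_pos.
      assert (Hl0 : 0 < lam a) by apply Rpower_pos.
      assert (HTb : TT * b <= KD * b) by (apply Rmult_le_compat_r; lra).
      assert (HTb0 : 0 <= TT * b) by (apply Rmult_le_pos; lra).
      assert (0 <= K * eta a * b) by (apply Rmult_le_pos; [apply Rmult_le_pos|]; lra).
      refine (conj Hb (conj HTb0 (conj HTb _))).
      destruct (Rle_lt_dec (lam a) b) as [Hlb|Hlb].
      + specialize (Hth Hlb). rewrite <- Heta in Hth.
        assert (th <= eta a) by nra.
        assert (TT <= K * eta a) by nra.
        assert (TT * b <= K * eta a * b) by (apply Rmult_le_compat_r; lra).
        assert (0 <= KD * lam a) by (apply Rmult_le_pos; lra). lra.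
      + assert (KD * b <= KD * lam a) by (apply Rmult_le_compat_l; lra). lra. }
    assert (HS : 0 < sumk k Bi) by (apply sumk_pos; auto; intros; apply Hper; auto).
    set (S := sumk k Bi) in *.
    assert (HT0 : 0 <= sumk k Ti) by (apply sumk_nonneg; intros; apply Hper; auto).
    assert (HT1 : sumk k Ti <= KD * S).
    { unfold S. rewrite <- sumk_scale. apply sumk_le. intros; apply Hper; auto. }
    assert (HT2 : sumk k Ti <= K * eta a * S + INR k * (KD * lam a)).
    { unfold S. rewrite <- sumk_scale, <- sumk_const, <- sumk_add. apply sumk_le. intros; apply Hper; auto. }
    set (T := sumk k Ti) in *.
    set (P := sumk k (fun i => rpow (Bi i) p)).
    change (sumk k (fun i => rpow (bubble n dg (mu i a) (xc i a) x) p)) with P.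
    assert (HP : 0 <= P) by (apply sumk_nonneg; intros; apply rpow_ge0).
    destruct (sumk_max k Bi Hk) as [j [Hj Hjmax]].
    assert (HSj : S <= INR k * Bi j).
    { unfold S. rewrite <- sumk_const. apply sumk_le; auto. }
    assert (HBj : 0 < Bi j) by (apply Hper; auto).
    assert (HPj : Rpower (Bi j) p <= P).
    { rewrite <- (rpow_pos (Bi j) p HBj). unfold P.
      apply (sumk_term k (fun i => rpow (Bi i) p)); auto. intros; apply rpow_ge0. }
    rewrite rpow_pos by auto.
    assert (Hrho0 : 0 < rho a) by apply Rpower_pos.
    set (A1 := Rpower KD tau * Rpower (rho a) (p - 1)).
    set (A2 := Rpower (INR k) p * Rpower (Z a) tau).
    assert (HA1 : 0 < A1) by (apply Rmult_lt_0_compat; apply Rpower_pos).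
    assert (HA2 : 0 < A2) by (apply Rmult_lt_0_compat; apply Rpower_pos).
    assert (HSp : 0 < Rpower S (p - tau)) by apply Rpower_pos.
    destruct (Rle_lt_dec S (rho a)) as [Hsr|Hsr].
    + assert (L1 : Rpower S (p - tau) * rpow T tau <= Rpower S (p - tau) * Rpower (KD * S) tau).
      { apply Rmult_le_compat_l; [lra|]. apply rpow_mono; try lra. apply Rmult_lt_0_compat; auto. }
      rewrite combine in L1 by auto.
      assert (E : Rpower S p = Rpower S (p - 1) * S).
      { rewrite <- (Rpower_1 S) at 3 by auto. rewrite <- Rpower_plus. f_equal; ring. }
      assert (L2 : Rpower S (p - 1) <= Rpower (rho a) (p - 1)) by (apply Rle_Rpower_l; lra).
      assert (L3 : Rpower KD tau * Rpower S p <= A1 * S).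
      { rewrite E. unfold A1. assert (0 < Rpower KD tau) by apply Rpower_pos.
        rewrite Rmult_assoc. apply Rmult_le_compat_l; [lra|]. apply Rmult_le_compat_r; lra. }
      assert (0 <= A1 * (B0 + P)) by (apply Rmult_le_pos; lra).
      assert (0 <= A2 * (B0 + S + P)) by (apply Rmult_le_pos; lra).
      replace ((A1 + A2) * (B0 + S + P)) with (A1 * S + A1 * (B0 + P) + A2 * (B0 + S + P)) by ring.
      lra.
    + assert (HTZ : T <= Z a * S).
      { rewrite Hlam in HT2. unfold Z.
        assert (INR k * KD * rho a * rho a <= INR k * KD * rho a * S).
        { apply Rmult_le_compat_l; [|lra]. apply Rmult_le_pos; [apply Rmult_le_pos|]; lra. }
        nra. }
      assert (L1 : Rpower S (p - tau) * rpow T tau <= Rpower S (p - tau) * Rpower (Z a * S) tau).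
      { apply Rmult_le_compat_l; [lra|]. apply rpow_mono; try lra. apply Rmult_lt_0_compat; auto. }
      rewrite combine in L1 by auto.
      assert (L2 : Rpower S p <= Rpower (INR k) p * P).
      { assert (Rpower S p <= Rpower (INR k * Bi j) p) by (apply Rle_Rpower_l; lra).
        rewrite <- Rpower_mult_distr in H by auto.
        assert (0 < Rpower (INR k) p) by apply Rpower_pos. nra. }
      assert (L3 : Rpower (Z a) tau * Rpower S p <= A2 * P).
      { unfold A2. assert (0 < Rpower (Z a) tau) by apply Rpower_pos. nra. }
      assert (0 <= A1 * (B0 + S + P)) by (apply Rmult_le_pos; lra).
      assert (0 <= A2 * (B0 + S)) by (apply Rmult_le_pos; lra).
      replace ((A1 + A2) * (B0 + S + P)) with (A1 * (B0 + S + P) + A2 * (B0 + S) + A2 * P) by ring.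
      lra.
Qed.
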